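(* Let $(X,\varphi)$ be an irreducible Smale space and $\mathcal R_1$ a Markov partition with $\max_{R\in\mathcal R_1}\operatorname{diam}R\le\varepsilon_X''$, generating $(\mathcal R_n)_{n\ge0}$. Then for every $n\in\mathbb N$, $$\mathcal R_{n+1}=\{R\in\varphi(\mathcal R_n)\vee\mathcal R_n\vee\varphi^{-1}(\mathcal R_n):\operatorname{int}(R)\ne\varnothing\}.$$
   Context: A Smale space $(X,\varphi)$: compact metric space $(X,d)$, homeomorphism $\varphi$, constants $\varepsilon_X>0,\lambda_X>1$ and a continuous bracket $[\cdot,\cdot]$ on $\{(x,y):d(x,y)\le\varepsilon_X\}$ with $[x,x]=x$, $[x,[y,z]]=[x,z]$, $[[x,y],z]=[x,z]$, $\varphi([x,y])=[\varphi(x),\varphi(y)]$ (whenever defined), such that $\varphi$ contracts distances by $\lambda_X^{-1}$ on local stable sets $X^s(x,\varepsilon)=\{y:d(x,y)<\varepsilon,[x,y]=y\}$ and $\varphi^{-1}$ contracts by $\lambda_X^{-1}$ on local unstable sets $X^u(x,\varepsilon)=\{y:d(x,y)<\varepsilon,[y,x]=y\}$. Irreducible: for nonempty open $U,V$ some $n\in\mathbb N$ has $\varphi^n(U)\cap V\ne\varnothing$. Fix $\varepsilon_X'\in(0,\varepsilon_X/2]$ with $d(x,y)\le\varepsilon_X'\Rightarrow d(x,[x,y]),d(y,[x,y])<\varepsilon_X/2$, and $\varepsilon_X''\in(0,\varepsilon_X'/12)$ with $d(x,y)\le\varepsilon_X''\Rightarrow d(\varphi^i x,\varphi^i y)\le\varepsilon_X'/2$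 ($|i|\le2$) and $d([x,y],x),d([x,y],y)\le\varepsilon_X'/4$. Rectangle: nonempty $R$, $\operatorname{diam}R\le\varepsilon_X'$, $[x,y]\in R$ for $x,y\in R$; $X^{s/u}(x,R)=X^{s/u}(x,2\varepsilon_X')\cap R$; proper: closed with $R=\operatorname{cl}\operatorname{int}R$. Markov partition: finite cover by nonempty proper rectangles with disjoint interiors such that $\varphi(X^u(x,R_i))\supset X^u(\varphi x,R_j)$ and $\varphi(X^s(x,R_i))\subset X^s(\varphi x,R_j)$ whenever $x\in\operatorname{int}R_i\cap\varphi^{-1}(\operatorname{int}R_j)$. $\mathcal U\vee\mathcal W=\{U\cap W:U\in\mathcal U,W\in\mathcal W\}$, $\varphi(\mathcal U)=\{\varphi(U):U\in\mathcal U\}$. The generated sequence: $\mathcal R_0=\{X\}$, $\mathcal R_n=\{R\in\bigvee_{i=1-n}^{n-1}\varphi^{-i}(\mathcal R_1):\operatorname{int}R\ne\varnothing\}$. *)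

(* Defs.v *)
From Stdlib Require Import Reals List ZArith.
Open Scope R_scope.
Set Implicit Arguments.

Section Defs.
Variable X : Type.
Variable d : X -> X -> R.

Definition is_metric : Prop :=
  (forall x y, 0 <= d x y) /\ (forall x y, d x y = 0 <-> x = y) /\
  (forall x y, d x y = d y x) /\ (forall x y z, d x z <= d x y + d y z).

Definition is_open (U : X -> Prop) : Prop :=
  forall x, U x -> exists r, 0 < r /\ forall y, d x y < r -> U y.

Definition is_closed (A : X -> Prop) : Prop := is_open (fun x => ~ A x).

Definition interior (A : X -> Prop) : X -> Prop :=
  fun x => exists r, 0 < r /\ forall y, d x y < r -> A y.

Definition closure (A : X -> Prop) : X -> Prop :=
  fun x => forall r, 0 < r -> exists y, d x y < r /\ A y.

Definition is_compact_space : Prop :=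
  forall (I : Type) (U : I -> X -> Prop),
    (forall i, is_open (U i)) -> (forall x, exists i, U i x) ->
    exists l : list I, forall x, exists i, In i l /\ U i x.

Definition continuous_map (f : X -> X) : Prop :=
  forall x e, 0 < e -> exists delta, 0 < delta /\
    forall y, d x y < delta -> d (f x) (f y) < e.

Definition homeomorphism (f finv : X -> X) : Prop :=
  continuous_map f /\ continuous_map finv /\
  (forall x, f (finv x) = x) /\ (forall x, finv (f x) = x).

Definition iterZ (f finv : X -> X) (k : Z) (x : X) : X :=
  if (0 <=? k)%Z then Nat.iter (Z.to_nat k) f x
  else Nat.iter (Z.to_nat (- k)) finv x.

Definition Xs (br : X -> X -> X) (x : X) (e : R) : X -> Prop :=
  fun y => d x y < e /\ br x y = y.
Definition Xu (br : X -> X -> X) (x : X) (e : R) : X -> Prop :=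
  fun y => d x y < e /\ br y x = y.

(* Smale space (X,d,phi) with inverse phiinv, bracket br (a total function,
   only constrained on the domain {(x,y) : d x y <= epsX}), constants epsX, lam *)
Definition smale_space (phi phiinv : X -> X) (br : X -> X -> X)
    (epsX lam : R) : Prop :=
  is_metric /\ is_compact_space /\ homeomorphism phi phiinv /\
  0 < epsX /\ 1 < lam /\
  (forall x y, d x y <= epsX -> forall e, 0 < e -> exists delta, 0 < delta /\
     forall x' y', d x' y' <= epsX -> d x x' < delta -> d y y' < delta ->
       d (br x y) (br x' y') < e) /\
  (forall x, br x x = x) /\
  (forall x y z, d y z <= epsX -> d x (br y z) <= epsX -> d x z <= epsX ->
     br x (br y z) = br x z) /\
  (forall x y z, d x y <= epsX -> d (br x y) z <= epsX -> d x z <= epsX ->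
     br (br x y) z = br x z) /\
  (forall x y, d x y <= epsX -> d (phi x) (phi y) <= epsX ->
     phi (br x y) = br (phi x) (phi y)) /\
  (forall x y z, Xs br x epsX y -> Xs br x epsX z ->
     d (phi y) (phi z) <= / lam * d y z) /\
  (forall x y z, Xu br x epsX y -> Xu br x epsX z ->
     d (phiinv y) (phiinv z) <= / lam * d y z).

Definition irreducible (phi : X -> X) : Prop :=
  forall U V : X -> Prop, is_open U -> is_open V ->
    (exists x, U x) -> (exists x, V x) ->
    exists n : nat, (1 <= n)%nat /\
      exists x, U x /\ V (Nat.iter n phi x).

(* the constants eps'_X and eps''_X *)
Definition eps1_ok (br : X -> X -> X) (epsX eps1 : R) : Prop :=
  0 < eps1 /\ eps1 <= epsX / 2 /\
  forall x y, d x y <= eps1 -> d x (br x y) < epsX / 2 /\ d y (br x y) < epsX / 2.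

Definition eps2_ok (phi phiinv : X -> X) (br : X -> X -> X) (eps1 eps2 : R) : Prop :=
  0 < eps2 /\ eps2 < eps1 / 12 /\
  forall x y, d x y <= eps2 ->
    (forall i : Z, (-2 <= i <= 2)%Z ->
        d (iterZ phi phiinv i x) (iterZ phi phiinv i y) <= eps1 / 2) /\
    d (br x y) x <= eps1 / 4 /\ d (br x y) y <= eps1 / 4.

Definition diam_le (A : X -> Prop) (c : R) : Prop :=
  forall x y, A x -> A y -> d x y <= c.

Definition rectangle (br : X -> X -> X) (eps1 : R) (A : X -> Prop) : Prop :=
  (exists x, A x) /\ diam_le A eps1 /\
  (forall x y, A x -> A y -> A (br x y)).

Definition XsR (br : X -> X -> X) (eps1 : R) (x : X) (A : X -> Prop) : X -> Prop :=
  fun y => Xs br x (2 * eps1) y /\ A y.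
Definition XuR (br : X -> X -> X) (eps1 : R) (x : X) (A : X -> Prop) : X -> Prop :=
  fun y => Xu br x (2 * eps1) y /\ A y.

Definition proper_set (A : X -> Prop) : Prop :=
  is_closed A /\ forall x, A x <-> closure (interior A) x.

Definition finite_coll (P : (X -> Prop) -> Prop) : Prop :=
  exists l : list (X -> Prop), forall A, P A <-> In A l.

Definition markov_partition (phi : X -> X) (br : X -> X -> X) (eps1 : R)
    (P : (X -> Prop) -> Prop) : Prop :=
  finite_coll P /\
  (forall x, exists A, P A /\ A x) /\
  (forall A, P A -> rectangle br eps1 A /\ proper_set A) /\
  (forall A B, P A -> P B -> A <> B -> forall x, ~ (interior A x /\ interior B x)) /\
  (forall A B x, P A -> P B -> interior A x -> interior B (phi x) ->
     (forall y, XuR br eps1 (phi x) B y -> exists z, XuR br eps1 x A z /\ phi z = y) /\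
     (forall z, XsR br eps1 x A z -> XsR br eps1 (phi x) B (phi z))).

Definition img_coll (f : X -> X) (P : (X -> Prop) -> Prop) : (X -> Prop) -> Prop :=
  fun W => exists A, P A /\ W = (fun y => exists x, A x /\ y = f x).

Definition join3 (P Q S : (X -> Prop) -> Prop) : (X -> Prop) -> Prop :=
  fun W => exists A B C, P A /\ Q B /\ S C /\ W = (fun x => A x /\ B x /\ C x).

Definition nonempty_interior (A : X -> Prop) : Prop := exists x, interior A x.

Definition join_range (phi phiinv : X -> X) (P : (X -> Prop) -> Prop) (n : nat)
    : (X -> Prop) -> Prop :=
  fun W => exists U : Z -> X -> Prop,
    (forall i : Z, (1 - Z.of_nat n <= i <= Z.of_nat n - 1)%Z ->
       img_coll (iterZ phi phiinv (- i)) P (U i)) /\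
    W = (fun x => forall i : Z, (1 - Z.of_nat n <= i <= Z.of_nat n - 1)%Z -> U i x).

Definition generated (phi phiinv : X -> X) (P : (X -> Prop) -> Prop) (n : nat)
    : (X -> Prop) -> Prop :=
  match n with
  | O => fun W => W = (fun _ => True)
  | S _ => fun W => join_range phi phiinv P n W /\ nonempty_interior W
  end.

End Defs.

(* Main.v *)
Require Import Defs.
From Stdlib Require Import Reals List ZArith Lia Classical FunctionalExtensionality PropExtensionality.
Open Scope R_scope.

Lemma pext_fun {X : Type} (A B : X -> Prop) : (forall x, A x <-> B x) -> A = B.
Proof. intros H; apply functional_extensionality; intro x; apply propositional_extensionality; auto. Qed.

Lemma iterZ_S {X : Type} (phi phiinv : X -> X) :
  (forall x, phi (phiinv x) = x) ->
  forall (k : Z) x, iterZ phi phiinv (k + 1) x = phi (iterZ phi phiinv k x).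
Proof.
  intros H1 k x. unfold iterZ.
  destruct (Z.leb_spec 0 k).
  - rewrite (proj2 (Z.leb_le 0 (k+1))) by lia.
    replace (Z.to_nat (k+1)) with (S (Z.to_nat k)) by lia. reflexivity.
  - destruct (Z.eq_dec k (-1)).
    + subst. simpl. rewrite H1. reflexivity.
    + rewrite (proj2 (Z.leb_gt 0 (k+1))) by lia.
      replace (Z.to_nat (-k)) with (S (Z.to_nat (-(k+1)))) by lia.
      simpl. rewrite H1. reflexivity.
Qed.

Lemma iterZ_P {X : Type} (phi phiinv : X -> X) :
  (forall x, phi (phiinv x) = x) -> (forall x, phiinv (phi x) = x) ->
  forall (k : Z) x, iterZ phi phiinv (k - 1) x = phiinv (iterZ phi phiinv k x).
Proof.
  intros H1 H2 k x.
  transitivity (phiinv (phi (iterZ phi phiinv (k-1) x))). symmetry; apply H2.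
  f_equal. rewrite <- iterZ_S by auto. f_equal; lia.
Qed.

Lemma iterZ_0 {X : Type} (phi phiinv : X -> X) x : iterZ phi phiinv 0 x = x.
Proof. reflexivity. Qed.

Lemma iterZ_add {X : Type} (phi phiinv : X -> X) :
  (forall x, phi (phiinv x) = x) -> (forall x, phiinv (phi x) = x) ->
  forall (a b : Z) x, iterZ phi phiinv a (iterZ phi phiinv b x) = iterZ phi phiinv (a + b) x.
Proof.
  intros H1 H2 a b x. induction a using Z.peano_ind.
  - reflexivity.
  - unfold Z.succ. rewrite iterZ_S by auto. rewrite IHa.
    rewrite <- iterZ_S by auto. f_equal; lia.
  - unfold Z.pred. change (a + -1)%Z with (a - 1)%Z. rewrite iterZ_P by auto. rewrite IHa.
    rewrite <- iterZ_P by auto. f_equal; lia.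
Qed.

Lemma iterZ_cancel {X : Type} (phi phiinv : X -> X) :
  (forall x, phi (phiinv x) = x) -> (forall x, phiinv (phi x) = x) ->
  forall (k : Z) x, iterZ phi phiinv (- k) (iterZ phi phiinv k x) = x.
Proof. intros H1 H2 k x. rewrite iterZ_add by auto. replace (-k + k)%Z with 0%Z by lia. reflexivity. Qed.

Lemma cont_iter {X : Type} (d : X -> X -> R) (f : X -> X) :
  continuous_map d f -> forall n, continuous_map d (Nat.iter n f).
Proof.
  intros Hf n. induction n.
  - intros x e He. exists e. split; auto.
  - intros x e He. simpl. destruct (Hf (Nat.iter n f x) e He) as [d1 [Hd1 H1]].
    destruct (IHn x d1 Hd1) as [d2 [Hd2 H2]].
    exists d2. split; auto.
Qed.

Lemma cont_iterZ {X : Type} (d : X -> X -> R) (phi phiinv : X -> X) :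
  continuous_map d phi -> continuous_map d phiinv ->
  forall k, continuous_map d (iterZ phi phiinv k).
Proof.
  intros Hp Hq k. unfold iterZ. destruct (0 <=? k)%Z.
  - apply cont_iter; auto.
  - apply cont_iter; auto.
Qed.

Lemma int_transport {X : Type} (d : X -> X -> R) (h hinv : X -> X) (A B : X -> Prop) x0 :
  continuous_map d hinv -> hinv (h x0) = x0 -> (forall z, h (hinv z) = z) ->
  (forall y, A y -> B (h y)) -> Defs.interior d A x0 -> Defs.interior d B (h x0).
Proof.
  intros Hc H1 H2 HAB [r [Hr Hball]].
  destruct (Hc (h x0) r Hr) as [dl [Hdl Hd]].
  exists dl. split; auto. intros z Hz.
  rewrite <- (H2 z). apply HAB. apply Hball.
  specialize (Hd z Hz). rewrite H1 in Hd. exact Hd.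
Qed.

Lemma img_iff {X : Type} (phi phiinv : X -> X) :
  (forall x, phi (phiinv x) = x) -> (forall x, phiinv (phi x) = x) ->
  forall (k : Z) (A : X -> Prop) y,
  (exists x, A x /\ y = iterZ phi phiinv k x) <-> A (iterZ phi phiinv (- k) y).
Proof.
  intros H1 H2 k A y. split.
  - intros [x [Hx ->]]. rewrite iterZ_cancel by auto. exact Hx.
  - intros Ha. exists (iterZ phi phiinv (-k) y). split; auto.
    rewrite iterZ_add by auto. replace (k + - k)%Z with 0%Z by lia. reflexivity.
Qed.

Lemma img_fun {X : Type} (f finv : X -> X) :
  (forall x, f (finv x) = x) -> (forall x, finv (f x) = x) ->
  forall (A : X -> Prop) y, (exists x, A x /\ y = f x) <-> A (finv y).
Proof.
  intros H1 H2 A y. split.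
  - intros [x [Hx ->]]. rewrite H2. exact Hx.
  - intros Ha. exists (finv y). rewrite H1. auto.
Qed.

Lemma jr_char {X : Type} (phi phiinv : X -> X) (R1 : (X -> Prop) -> Prop) :
  (forall x, phi (phiinv x) = x) -> (forall x, phiinv (phi x) = x) ->
  forall (lo hi : Z) (W : X -> Prop),
  (exists U : Z -> X -> Prop,
    (forall i : Z, (lo <= i <= hi)%Z -> img_coll (iterZ phi phiinv (- i)) R1 (U i)) /\
    W = (fun x => forall i : Z, (lo <= i <= hi)%Z -> U i x)) <->
  (exists A : Z -> X -> Prop,
    (forall i : Z, (lo <= i <= hi)%Z -> R1 (A i)) /\
    W = (fun x => forall i : Z, (lo <= i <= hi)%Z -> A i (iterZ phi phiinv i x))).
Proof.
  intros H1 H2 lo hi W. split.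
  - intros [U [HU ->]].
    exists (fun i z => U i (iterZ phi phiinv (- i) z)). split.
    + intros i Hi. destruct (HU i Hi) as [B [HB HUi]]. rewrite HUi.
      replace (fun z => exists x, B x /\ iterZ phi phiinv (- i) z = iterZ phi phiinv (- i) x)
        with B; auto.
      apply pext_fun. intro z. rewrite img_iff by auto. rewrite Z.opp_involutive.
      rewrite iterZ_add by auto. replace (i + - i)%Z with 0%Z by lia. reflexivity.
    + apply pext_fun. intro x. split; intros H i Hi; specialize (H i Hi).
      * rewrite iterZ_cancel by auto. auto.
      * rewrite iterZ_cancel in H by auto. auto.
  - intros [A [HA ->]].
    exists (fun i x => A i (iterZ phi phiinv i x)). split; auto.
    intros i Hi. exists (A i). split; auto.
    apply pext_fun. intro y. rewrite img_iff by auto. rewrite Z.opp_involutive. reflexivity.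
Qed.

Lemma same_piece {X : Type} (d : X -> X -> R) (phi phiinv : X -> X) (R1 : (X -> Prop) -> Prop) :
  continuous_map d phi -> continuous_map d phiinv ->
  (forall x, phi (phiinv x) = x) -> (forall x, phiinv (phi x) = x) ->
  (forall A B, R1 A -> R1 B -> A <> B -> forall x, ~ (Defs.interior d A x /\ Defs.interior d B x)) ->
  forall (P Q W : X -> Prop) (j : Z) x0, R1 P -> R1 Q -> Defs.interior d W x0 ->
  (forall y, W y -> P (iterZ phi phiinv j y)) -> (forall y, W y -> Q (iterZ phi phiinv j y)) -> P = Q.
Proof.
  intros Hc1 Hc2 H1 H2 Hdisj P Q W j x0 HP HQ Hint HWP HWQ.
  apply NNPP. intro Hne. apply (Hdisj P Q HP HQ Hne (iterZ phi phiinv j x0)).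
  split; apply int_transport with (A := W) (hinv := iterZ phi phiinv (- j)); auto;
    try apply cont_iterZ; auto; try apply iterZ_cancel; auto;
    intro z; rewrite <- (Z.opp_involutive j) at 1; apply iterZ_cancel; auto.
Qed.

Lemma g_phiinv {X : Type} (phi phiinv : X -> X) :
  (forall x, phi (phiinv x) = x) -> (forall x, phiinv (phi x) = x) ->
  forall (i : Z) y, iterZ phi phiinv i (phiinv y) = iterZ phi phiinv (i - 1) y.
Proof. intros H1 H2 i y. change (phiinv y) with (iterZ phi phiinv (-1) y). rewrite iterZ_add by auto. f_equal; lia. Qed.

Lemma g_phi {X : Type} (phi phiinv : X -> X) :
  (forall x, phi (phiinv x) = x) -> (forall x, phiinv (phi x) = x) ->
  forall (i : Z) y, iterZ phi phiinv i (phi y) = iterZ phi phiinv (i + 1) y.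
Proof. intros H1 H2 i y. change (phi y) with (iterZ phi phiinv 1 y). rewrite iterZ_add by auto. f_equal. Qed.

Theorem lemma5p9 (X : Type) (d : X -> X -> R) (phi phiinv : X -> X)
    (br : X -> X -> X) (epsX lam eps1 eps2 : R) (R1 : (X -> Prop) -> Prop) :
  smale_space d phi phiinv br epsX lam ->
  irreducible d phi ->
  eps1_ok d br epsX eps1 ->
  eps2_ok d phi phiinv br eps1 eps2 ->
  markov_partition d phi br eps1 R1 ->
  (forall A, R1 A -> diam_le d A eps2) ->
  forall n : nat, (1 <= n)%nat ->
    forall W : X -> Prop,
      generated d phi phiinv R1 (S n) W <->
      (join3 (img_coll phi (generated d phi phiinv R1 n))
             (generated d phi phiinv R1 n)
             (img_coll phiinv (generated d phi phiinv R1 n)) W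
       /\ nonempty_interior d W).
Proof.
  intros Hs _ _ _ Hmp _ n Hn W.
  destruct Hs as [_ [_ [[Hcp [Hcq [H1 H2]]] _]]].
  destruct Hmp as [_ [_ [_ [Hdisj _]]]].
  destruct n as [|m]; [lia|].
  unfold generated.
  set (g := iterZ phi phiinv).
  split.
  - intros [HJ Hint]. split; auto.
    unfold join_range in HJ. apply jr_char in HJ; auto.
    destruct HJ as [A [HA HW]]. fold g in HW.
    destruct Hint as [x0 Hx0].
    set (S1 := fun x => forall i : Z, (1 - Z.of_nat (S m) <= i <= Z.of_nat (S m) - 1)%Z ->
                 A (i - 1)%Z (g i x)).
    set (S2 := fun x => forall i : Z, (1 - Z.of_nat (S m) <= i <= Z.of_nat (S m) - 1)%Z ->
                 A i (g i x)).
    set (S3 := fun x => forall i : Z, (1 - Z.of_nat (S m) <= i <= Z.of_nat (S m) - 1)%Z ->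
                 A (i + 1)%Z (g i x)).
    assert (HW1 : forall y, W y -> S1 (phiinv y)).
    { intros y Hy i Hi. unfold g. rewrite g_phiinv by auto. rewrite HW in Hy. apply Hy. lia. }
    assert (HW2 : forall y, W y -> S2 y).
    { intros y Hy i Hi. rewrite HW in Hy. apply Hy. lia. }
    assert (HW3 : forall y, W y -> S3 (phi y)).
    { intros y Hy i Hi. unfold g. rewrite g_phi by auto. rewrite HW in Hy. apply Hy. lia. }
    exists (fun y => exists x, S1 x /\ y = phi x), S2, (fun y => exists x, S3 x /\ y = phiinv x).
    split; [|split; [|split]].
    + exists S1. split; auto. split.
      * unfold join_range. apply jr_char; auto. exists (fun i => A (i - 1)%Z). split; auto.
        intros i Hi. apply HA. lia.
      * exists (phiinv x0). apply int_transport with (A := W) (hinv := phi); auto.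
    + split.
      * unfold join_range. apply jr_char; auto. exists A. split; auto.
        intros i Hi. apply HA. lia.
      * exists x0. apply int_transport with (h := fun x => x) (hinv := fun x => x) (A := W); auto.
        intros x e He. exists e. auto.
    + exists S3. split; auto. split.
      * unfold join_range. apply jr_char; auto. exists (fun i => A (i + 1)%Z). split; auto.
        intros i Hi. apply HA. lia.
      * exists (phi x0). apply int_transport with (A := W) (hinv := phiinv); auto.
    + rewrite HW at 1. apply pext_fun. intro x.
      rewrite (img_fun phi phiinv H1 H2), (img_fun phiinv phi H2 H1).
      split.
      * intros H. assert (Hw : W x) by (rewrite HW; exact H).
        split; [apply HW1|split; [apply HW2|apply HW3]]; auto.
      * intros [Ha [Hb Hc]] i Hi.
        destruct (Z_lt_le_dec i (- Z.of_nat m)).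
        -- specialize (Ha (i + 1)%Z ltac:(lia)). unfold g in Ha. rewrite g_phiinv in Ha by auto.
           replace (i + 1 - 1)%Z with i in Ha by lia. exact Ha.
        -- destruct (Z_lt_le_dec (Z.of_nat m) i).
           ++ specialize (Hc (i - 1)%Z ltac:(lia)). unfold g in Hc. rewrite g_phi in Hc by auto.
              replace (i - 1 + 1)%Z with i in Hc by lia. exact Hc.
           ++ apply Hb. lia.
  - intros [[T1 [T2 [T3 [[S1 [[HJ1 HI1] ->]] [[HJ2 HI2] [[S3 [[HJ3 HI3] ->]] HW]]]]]] Hint].
    split; [|exact Hint].
    unfold join_range in HJ1, HJ2, HJ3 |- *.
    apply jr_char in HJ1; auto. apply jr_char in HJ2; auto. apply jr_char in HJ3; auto.
    destruct HJ1 as [C1 [HC1 ->]]. destruct HJ2 as [C2 [HC2 ->]]. destruct HJ3 as [C3 [HC3 ->]].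
    fold g.
    destruct Hint as [x0 Hx0].
    assert (HWe : forall x, W x <-> ((forall i : Z, (1 - Z.of_nat (S m) <= i <= Z.of_nat (S m) - 1)%Z ->
                 C1 i (g (i - 1)%Z x)) /\
               (forall i : Z, (1 - Z.of_nat (S m) <= i <= Z.of_nat (S m) - 1)%Z -> C2 i (g i x)) /\
               (forall i : Z, (1 - Z.of_nat (S m) <= i <= Z.of_nat (S m) - 1)%Z ->
                 C3 i (g (i + 1)%Z x)))).
    { intro x. rewrite HW. rewrite (img_fun phi phiinv H1 H2), (img_fun phiinv phi H2 H1).
      unfold g. split; intros [Ha [Hb Hc]]; split; [|split| |split]; auto;
      intros i Hi; [rewrite <- g_phiinv by auto | rewrite <- g_phi by auto
                   | rewrite g_phiinv by auto | rewrite g_phi by auto]; auto. }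
    assert (E1 : forall j : Z, (- Z.of_nat m <= j <= Z.of_nat m - 1)%Z -> C1 (j + 1)%Z = C2 j).
    { intros j Hj. apply (same_piece d phi phiinv R1 Hcp Hcq H1 H2 Hdisj _ _ W j x0); auto.
      - apply HC1. lia.
      - apply HC2. lia.
      - intros y Hy. apply HWe in Hy. destruct Hy as [Ha _].
        specialize (Ha (j + 1)%Z ltac:(lia)). replace (j + 1 - 1)%Z with j in Ha by lia. exact Ha.
      - intros y Hy. apply HWe in Hy. destruct Hy as [_ [Hb _]]. apply Hb. lia. }
    assert (E3 : forall j : Z, (- Z.of_nat m + 1 <= j <= Z.of_nat m)%Z -> C3 (j - 1)%Z = C2 j).
    { intros j Hj. apply (same_piece d phi phiinv R1 Hcp Hcq H1 H2 Hdisj _ _ W j x0); auto.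
      - apply HC3. lia.
      - apply HC2. lia.
      - intros y Hy. apply HWe in Hy. destruct Hy as [_ [_ Hc]].
        specialize (Hc (j - 1)%Z ltac:(lia)). replace (j - 1 + 1)%Z with j in Hc by lia. exact Hc.
      - intros y Hy. apply HWe in Hy. destruct Hy as [_ [Hb _]]. apply Hb. lia. }
    apply jr_char; auto.
    exists (fun i => if (i <? - Z.of_nat m)%Z then C1 (i + 1)%Z
                else if (Z.of_nat m <? i)%Z then C3 (i - 1)%Z else C2 i).
    split.
    + intros i Hi. destruct (Z.ltb_spec i (- Z.of_nat m)).
      * apply HC1. lia.
      * destruct (Z.ltb_spec (Z.of_nat m) i).
        -- apply HC3. lia.
        -- apply HC2. lia.
    + apply pext_fun. intro x. rewrite HWe. fold g. split.
      * intros [Ha [Hb Hc]] i Hi. destruct (Z.ltb_spec i (- Z.of_nat m)).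
        -- specialize (Ha (i + 1)%Z ltac:(lia)). replace (i + 1 - 1)%Z with i in Ha by lia. exact Ha.
        -- destruct (Z.ltb_spec (Z.of_nat m) i).
           ++ specialize (Hc (i - 1)%Z ltac:(lia)). replace (i - 1 + 1)%Z with i in Hc by lia. exact Hc.
           ++ apply Hb. lia.
      * intros H. split; [|split]; intros i Hi.
        -- specialize (H (i - 1)%Z ltac:(lia)). simpl in H.
           destruct (Z.ltb_spec (i - 1) (- Z.of_nat m)).
           ++ replace (i - 1 + 1)%Z with i in H by lia. exact H.
           ++ destruct (Z.ltb_spec (Z.of_nat m) (i - 1)); [lia|].
              rewrite <- E1 in H by lia. replace (i - 1 + 1)%Z with i in H by lia. exact H.
        -- specialize (H i ltac:(lia)). simpl in H.
           destruct (Z.ltb_spec i (- Z.of_nat m)); [lia|].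
           destruct (Z.ltb_spec (Z.of_nat m) i); [lia|]. exact H.
        -- specialize (H (i + 1)%Z ltac:(lia)). simpl in H.
           destruct (Z.ltb_spec (i + 1) (- Z.of_nat m)); [lia|].
           destruct (Z.ltb_spec (Z.of_nat m) (i + 1)).
           ++ replace (i + 1 - 1)%Z with i in H by lia. exact H.
           ++ rewrite <- E3 in H by lia. replace (i + 1 - 1)%Z with i in H by lia. exact H.
Qed.
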